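(* Let $m,n,w,d$ be positive integers with $1\le w\le m-1$, let $l$ be a positive integer dividing $n$ and $v$ an integer with $0\le v\le l$. Then $$A(m,n,w,d)\le\left(\frac{m}{w}\right)^{\frac{nv}{l}}\left(\frac{m}{m-w}\right)^{n-\frac{nv}{l}} A\left((m-1)l,\frac{n}{l},lw-v,d\right),$$ and $$A(m,n,w,d)\le\left(\frac{m^l}{\binom{l}{v}w^v(m-w)^{l-v}}\right)^{\frac{n}{l}} A\left((m-1)l,\frac{n}{l},lw-v,d-\frac{n}{l}\min\{v,l-v\}\right).$$
   Context: $J(m,w)$ denotes the set of binary vectors of length $m$ and Hamming weight $w$. Elements of $J(m,w)^n$ are identified with $m\times n$ binary matrices all of whose columns have weight $w$, with distance the binary Hamming distance. $A(m,n,w,d)$ denotes the maximum cardinality of a nonempty subset of $J(m,w)^n$ in which any two distinct elements are at Hamming distance at least $2d$ (for $d\le 0$ this equals $\binom{m}{w}^n$). *)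

(* Defs.v *)
From mathcomp Require Import all_boot all_order all_algebra.
Set Implicit Arguments. Unset Strict Implicit. Unset Printing Implicit Defensive.
Import Order.TTheory GRing.Theory Num.Theory.

(* Elements of J(m,w)^n are m x n binary matrices whose columns all have
   Hamming weight w. *)
Definition col_weight_is (m n w : nat) (X : 'M[bool]_(m, n)) : bool :=
  [forall j : 'I_n, #|[set i : 'I_m | X i j]| == w].

Definition hdist (m n : nat) (X Y : 'M[bool]_(m, n)) : nat :=
  #|[set ij : 'I_m * 'I_n | X ij.1 ij.2 != Y ij.1 ij.2]|.

Definition is_code (m n w : nat) (d : int) (C : {set 'M[bool]_(m, n)}) : bool :=
  [&& C != set0,
      [forall X in C, col_weight_is w X] &
      [forall X in C, forall Y in C, (X != Y) ==> (2 * d <= (hdist X Y)%:Z)%R]].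

(* A(m,n,w,d): maximum cardinality of such a code (d : int; for d <= 0 this
   is binom(m,w)^n automatically). *)
Definition A (m n w : nat) (d : int) : nat :=
  \max_(C : {set 'M[bool]_(m, n)} | is_code w d C) #|C|.

(* Main.v *)
Require Import Defs.
From mathcomp Require Import all_boot all_order all_algebra.
From mathcomp Require Import zify.
Import Order.TTheory GRing.Theory Num.Theory.
Set Implicit Arguments. Unset Strict Implicit. Unset Printing Implicit Defensive.

Definition unpair a b (i : 'I_(a * b)) : 'I_a * 'I_b :=
  enum_val (cast_ord (esym (mxvec_cast a b)) i).

Lemma unpairK a b (i : 'I_a) (j : 'I_b) : unpair (mxvec_index i j) = (i, j).
Proof. by rewrite /unpair /mxvec_index cast_ordK enum_rankK. Qed.

Lemma pairK a b (i : 'I_(a * b)) : mxvec_index (unpair i).1 (unpair i).2 = i.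
Proof. by rewrite /unpair /mxvec_index -surjective_pairing enum_valK cast_ordKV. Qed.

Lemma big_pair (R : Type) (idx : R) (op : Monoid.com_law idx) a b (F : 'I_(a*b) -> R) :
  \big[op/idx]_(i : 'I_(a*b)) F i =
  \big[op/idx]_(x < a) \big[op/idx]_(y < b) F (mxvec_index x y).
Proof.
rewrite pair_big (reindex (fun x : 'I_a * 'I_b => mxvec_index x.1 x.2)) //.
exists (@unpair a b) => [[x y] _|i _]; first by rewrite unpairK.
exact: pairK.
Qed.

Lemma card_sum (T : finType) (P : pred T) : #|[set x | P x]| = \sum_x (P x : nat).
Proof.
rewrite cardsE -sum1_card big_mkcond /=; apply: eq_bigr => x _.
rewrite /in_mem /=; by case: (P x).
Qed.

Lemma sum_lift m (F : 'I_m.+1 -> nat) (i0 : 'I_m.+1) :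
  \sum_i F i = F i0 + \sum_(i < m) F (lift i0 i).
Proof. by rewrite (bigD1_ord i0). Qed.

Lemma prod_if l (f : 'I_l -> bool) a c :
  \prod_(p < l) (if f p then a else c) = a ^ (\sum_p f p) * c ^ (l - \sum_p f p).
Proof.
have -> : l - \sum_p f p = \sum_p (~~ f p : nat).
  have : \sum_p (f p : nat) + \sum_p (~~ f p : nat) = l.
    rewrite -big_split /= -[X in _ = X]card_ord -sum1_card.
    by apply: eq_bigr => p _; case: (f p).
  lia.
rewrite !expn_sum -big_split /=; apply: eq_bigr => p _.
by case: (f p); rewrite ?expn1 ?expn0 ?muln1 ?mul1n.
Qed.

Lemma prod_bool n (P : 'I_n -> bool) : \prod_b (P b : nat) = [forall b, P b].
Proof.
case: (boolP [forall b, P b]) => [/forallP H|].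
  by rewrite big1 // => b _; rewrite H.
rewrite negb_forall => /existsP [b Hb].
by rewrite (bigD1 b) //= (negbTE Hb).
Qed.

Lemma max_mul_le (I : finType) (P : pred I) (F : I -> nat) Q K :
  (forall i, P i -> F i * Q <= K) -> (\max_(i | P i) F i) * Q <= K.
Proof.
move=> H; elim/big_ind: _ => //.
move=> x y Hx Hy; rewrite /maxn; by case: ltnP.
Qed.
Section Proj.
Variables (m' k l : nat).
Local Notation M := (m'.+1).
Local Notation Mat := 'M[bool]_(M, k * l).
Local Notation Rt := {ffun 'I_(k * l) -> 'I_M}.

Definition pat (r : Rt) (X : Mat) : {ffun 'I_(k * l) -> bool} := [ffun j => X (r j) j].

Definition proj (r : Rt) (X : Mat) : 'M[bool]_(m' * l, k) :=
  \matrix_(i, b) (let j := mxvec_index b (unpair i).2 in X (lift (r j) (unpair i).1) j).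

Lemma hdist_sum a c (X Y : 'M[bool]_(a, c)) :
  hdist X Y = \sum_(j < c) \sum_(i < a) (X i j != Y i j : nat).
Proof. by rewrite /hdist card_sum -(pair_bigA _ (fun i j => (X i j != Y i j : nat)) ) exchange_big. Qed.

Lemma hdist_proj r X Y : hdist (proj r X) (proj r Y) =
  \sum_j \sum_(i < m') (X (lift (r j) i) j != Y (lift (r j) i) j : nat).
Proof.
rewrite hdist_sum big_pair; apply: eq_bigr => b _.
rewrite big_pair exchange_big; apply: eq_bigr => p _.
by apply: eq_bigr => x _; rewrite !mxE unpairK.
Qed.

Lemma hdist_decomp r X Y :
  hdist X Y = \sum_j (pat r X j != pat r Y j : nat) + hdist (proj r X) (proj r Y).
Proof.
rewrite hdist_sum hdist_proj -big_split /=; apply: eq_bigr => j _.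
by rewrite (sum_lift _ (r j)) !ffunE.
Qed.

Lemma col_sum w (X : Mat) : col_weight_is w X -> forall j, \sum_i (X i j : nat) = w.
Proof. by move=> /forallP H j; rewrite -card_sum; apply/eqP/H. Qed.

Lemma diff_le w r X Y : col_weight_is w X -> col_weight_is w Y ->
  \sum_j (pat r X j != pat r Y j : nat) <= hdist (proj r X) (proj r Y).
Proof.
move=> /col_sum HX /col_sum HY; rewrite hdist_proj; apply: leq_sum => j _.
rewrite !ffunE.
case: (boolP (X (r j) j != Y (r j) j)) => //= Hne.
rewrite lt0n sum_nat_eq0; apply/negP => /forallP H.
move: (HX j) (HY j); rewrite (sum_lift _ (r j)) [\sum_i (Y i j : nat)](sum_lift _ (r j)).
have -> : \sum_(i < m') (Y (lift (r j) i) j : nat) = \sum_(i < m') (X (lift (r j) i) j : nat).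
  apply: eq_bigr => i _; move: (H i) => /=; by case: (X _ j); case: (Y _ j).
move: Hne; case: (X (r j) j); case: (Y (r j) j) => //= _; lia.
Qed.

Lemma hdist0 a c (X Y : 'M[bool]_(a, c)) : hdist X Y = 0 -> X = Y.
Proof.
move=> /eqP; rewrite /hdist cards_eq0 => /eqP H; apply/matrixP => i j.
apply/eqP; apply/negPn/negP => Hn.
have : (i, j) \in [set ij : 'I_a * 'I_c | X ij.1 ij.2 != Y ij.1 ij.2] by rewrite inE.
by rewrite H inE.
Qed.

Lemma weight_proj w r X b : col_weight_is w X ->
  #|[set i | proj r X i b]| = l * w - \sum_(p < l) (pat r X (mxvec_index b p) : nat).
Proof.
move=> /col_sum HX.
rewrite card_sum big_pair exchange_big /=.
have E : forall p : 'I_l, \sum_(x < m') (proj r X (mxvec_index x p) b : nat)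
   = w - pat r X (mxvec_index b p).
  move=> p; rewrite -(HX (mxvec_index b p)) (sum_lift _ (r (mxvec_index b p))) ffunE.
  rewrite addKn; apply: eq_bigr => x _; by rewrite mxE unpairK.
rewrite (eq_bigr _ (fun p _ => E p)).
have Hle : forall p : 'I_l, (pat r X (mxvec_index b p) : nat) <= w.
  move=> p; rewrite -(HX (mxvec_index b p)) (sum_lift _ (r (mxvec_index b p))) ffunE.
  exact: leq_addr.
have : \sum_(p < l) (w - pat r X (mxvec_index b p)) + \sum_(p < l) (pat r X (mxvec_index b p) : nat) = l * w.
  rewrite -big_split /= -[X in X * w]card_ord -sum_nat_const.
  by apply: eq_bigr => p _; rewrite subnK.
move=> HH; rewrite -HH addnK //.
Qed.
End Proj.

Lemma code_le_A a c w (d : int) (C : {set 'M[bool]_(a, c)}) :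
  is_code w d C -> #|C| <= A a c w d.
Proof. move=> H; exact: (@leq_bigmax_cond _ (fun C => is_code w d C) (fun C => #|C|) C H). Qed.

Lemma A_ge_nonneg a c w (d : int) (C : {set 'M[bool]_(a, c)}) :
  C != set0 -> [forall X in C, col_weight_is w X] ->
  (forall X Y, X \in C -> Y \in C -> X != Y -> (2 * d <= (hdist X Y)%:Z)%R) ->
  #|C| <= A a c w d.
Proof.
move=> H1 H2 H3; apply: code_le_A; rewrite /is_code H1 H2 /=.
apply/forallP => X; apply/implyP => HX; apply/forallP => Y; apply/implyP => HY.
apply/implyP; exact: H3.
Qed.

Section Avg.
Variables (m' k l : nat).
Local Notation M := (m'.+1).
Local Notation Mat := 'M[bool]_(M, k * l).
Local Notation Rt := {ffun 'I_(k * l) -> 'I_M}.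

Lemma Cr_le w v (d d' : int) e (C : {set Mat}) (S : {set {ffun 'I_(k * l) -> bool}}) r :
  is_code w d C ->
  (forall s, s \in S -> forall b : 'I_k, \sum_(p < l) (s (mxvec_index b p) : nat) = v) ->
  (forall s1 s2, s1 \in S -> s2 \in S -> \sum_j (s1 j != s2 j : nat) <= e) ->
  (2 * d' + e%:Z <= 2 * d)%R ->
  #|[set X in C | pat r X \in S]| <= A (m' * l) k (l * w - v) d'.
Proof.
move=> /and3P [_ /forallP Hw /forallP Hd] HS He Hdd.
set Cr := [set X in C | pat r X \in S].
have HwC : forall X, X \in Cr -> col_weight_is w X.
  by move=> X; rewrite inE => /andP [HX _]; move: (Hw X); rewrite HX.
have HdC : forall X Y, X \in Cr -> Y \in Cr -> X != Y -> (2 * d <= (hdist X Y)%:Z)%R.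
  move=> X Y; rewrite !inE => /andP [HX _] /andP [HY _] Hne.
  move: (Hd X); rewrite HX /= => /forallP /(_ Y); by rewrite HY Hne.
have HSC : forall X, X \in Cr -> pat r X \in S by move=> X; rewrite inE => /andP [].
case: (eqVneq Cr set0) => [->|Hne]; first by rewrite cards0.
have inj : {in Cr &, injective (proj r)}.
  move=> X Y HX HY Heq; apply/eqP; apply/negPn/negP => Hxy.
  have h1 := HdC X Y HX HY Hxy.
  have h2 := hdist_decomp r X Y.
  have h3 := diff_le r (HwC X HX) (HwC Y HY).
  have h4 : hdist (proj r X) (proj r Y) = 0 by rewrite Heq /hdist; apply/eqP; rewrite cards_eq0;
     apply/eqP/setP => ij; rewrite !inE eqxx.
  have h5 : hdist X Y = 0 by lia.
  by move/hdist0: h5 => /eqP; rewrite (negbTE Hxy).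
rewrite -(card_in_imset inj); apply: A_ge_nonneg.
- by rewrite imset_eq0.
- apply/forallP => Y; apply/implyP => /imsetP [X HX ->].
  apply/forallP => b; apply/eqP; rewrite (weight_proj _ _ (HwC X HX)).
  by rewrite HS // HSC.
- move=> Y1 Y2 /imsetP [X1 H1 ->] /imsetP [X2 H2 ->] Hne'.
  have Hx : X1 != X2 by apply: contraNneq Hne' => ->.
  have h1 := HdC X1 X2 H1 H2 Hx.
  have h2 := hdist_decomp r X1 X2.
  have h3 := He _ _ (HSC X1 H1) (HSC X2 H2).
  move: h1 h2 h3 Hdd; set D := \sum_j _; set P := hdist (proj r X1) _.
  move=> h1 h2 h3 Hdd; rewrite h2 in h1. lia.
Qed.
End Avg.

Lemma card_sum_in (T : finType) (C : {set T}) (P : pred T) :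
  #|[set X in C | P X]| = \sum_(X in C) (P X : nat).
Proof.
rewrite card_sum [RHS]big_mkcond /=; apply: eq_bigr => X _.
by case: (X \in C).
Qed.

Lemma mem_sum (T : finType) (S : {set T}) x : (x \in S : nat) = \sum_(s in S) (x == s : nat).
Proof.
case: (boolP (x \in S)) => Hx.
  rewrite (bigD1 x) //= eqxx big1 // => s /andP [_ ne]; by rewrite eq_sym (negbTE ne).
rewrite big1 // => s Hs; case: eqP => // E; by rewrite E Hs in Hx.
Qed.

Section Avg2.
Variables (m' k l : nat).
Local Notation M := (m'.+1).
Local Notation Mat := 'M[bool]_(M, k * l).
Local Notation Rt := {ffun 'I_(k * l) -> 'I_M}.

Lemma count_r w (X : Mat) s : col_weight_is w X ->
  \sum_(r : Rt) (pat r X == s : nat) = \prod_j (if s j then w else M - w).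
Proof.
move=> /col_sum HX.
transitivity (\sum_(r : Rt) \prod_j (X (r j) j == s j : nat)).
  apply: eq_bigr => r _.
  have -> : (pat r X == s) = [forall j, pat r X j == s j].
    apply/eqP/forallP => [->//|H]; apply/ffunP => j; exact/eqP/H.
  by rewrite -prod_bool; apply: eq_bigr => j _; rewrite ffunE.
rewrite -(@bigA_distr_bigA _ _ _ _ _ _ _ (fun j (i : 'I_M) => (X i j == s j : nat))).
apply: eq_bigr => j _; case: (s j).
  by rewrite -(HX j); apply: eq_bigr => i _; rewrite eqb_id.
have : \sum_(i < M) (X i j : nat) + \sum_(i < M) (X i j == false : nat) = M.
  rewrite -big_split /= -[X in _ = X]card_ord -sum1_card.
  by apply: eq_bigr => i _; case: (X i j).
rewrite HX => H. apply: (@addnI w). rewrite H subnKC //. move: (leq_addr (\sum_(i < M) (X i j == false : nat)) w). by rewrite H.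
Qed.

Lemma sum_Cr w v (d : int) (C : {set Mat}) (S : {set {ffun 'I_(k * l) -> bool}}) :
  is_code w d C ->
  (forall s, s \in S -> forall b : 'I_k, \sum_(p < l) (s (mxvec_index b p) : nat) = v) ->
  \sum_(r : Rt) #|[set X in C | pat r X \in S]| =
    #|C| * (#|S| * (w ^ (k * v) * (M - w) ^ (k * l - k * v))).
Proof.
move=> /and3P [_ /forallP Hw _] HS.
under eq_bigr => r _ do rewrite card_sum_in.
rewrite exchange_big /= -sum_nat_const; apply: eq_bigr => X HX.
have HwX : col_weight_is w X by move: (Hw X); rewrite HX.
under eq_bigr => r _ do rewrite mem_sum.
rewrite exchange_big /= -sum_nat_const; apply: eq_bigr => s Hs.
rewrite (count_r _ HwX) big_pair.
under eq_bigr => b _ do rewrite (prod_if (fun p => s (mxvec_index b p))) (HS s Hs b).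
rewrite prod_nat_const card_ord expnMn -!expnM mulnBl [v * k]mulnC [l * k]mulnC //.
Qed.
End Avg2.

Lemma avg (m' k l : nat) w v (d d' : int) e (C : {set 'M[bool]_(m'.+1, k * l)})
  (S : {set {ffun 'I_(k * l) -> bool}}) :
  is_code w d C ->
  (forall s, s \in S -> forall b : 'I_k, \sum_(p < l) (s (mxvec_index b p) : nat) = v) ->
  (forall s1 s2, s1 \in S -> s2 \in S -> \sum_j (s1 j != s2 j : nat) <= e) ->
  (2 * d' + e%:Z <= 2 * d)%R ->
  #|C| * (#|S| * (w ^ (k * v) * (m'.+1 - w) ^ (k * l - k * v))) <=
    m'.+1 ^ (k * l) * A (m' * l) k (l * w - v) d'.
Proof.
move=> HC HS He Hd.
rewrite -(sum_Cr HC HS).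
apply: (@leq_trans (\sum_(r : {ffun 'I_(k * l) -> 'I_m'.+1}) A (m' * l) k (l * w - v) d')).
  apply: leq_sum => r _; exact: (@Cr_le m' k l w v d d' e C S r HC HS He Hd).
by rewrite sum_nat_const card_ffun !card_ord.
Qed.

Lemma sum_lt l v : v <= l -> \sum_(p < l) ((p < v) : nat) = v.
Proof.
move=> vl; rewrite -(big_mkord xpredT (fun p => ((p < v) : nat))).
rewrite (big_cat_nat (leq0n v) vl) /=.
rewrite (@eq_big_nat _ _ _ 0 v _ (fun=> 1)); last by move=> i /andP [_ ->].
rewrite (@eq_big_nat _ _ _ v l _ (fun=> 0)); last by move=> i /andP [H _]; rewrite ltnNge H.
by rewrite !sum_nat_const_nat muln0 addn0 muln1 subn0.
Qed.

Lemma block_diff l v (f g : 'I_l -> bool) :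
  \sum_p (f p : nat) = v -> \sum_p (g p : nat) = v ->
  \sum_p (f p != g p : nat) <= 2 * minn v (l - v).
Proof.
move=> Hf Hg.
have cf : \sum_p (f p : nat) + \sum_p (~~ f p : nat) = l.
  rewrite -big_split /= -[X in _ = X]card_ord -sum1_card.
  by apply: eq_bigr => i _; case: (f i).
have cg : \sum_p (g p : nat) + \sum_p (~~ g p : nat) = l.
  rewrite -big_split /= -[X in _ = X]card_ord -sum1_card.
  by apply: eq_bigr => i _; case: (g i).
have E : \sum_p (f p != g p : nat) = \sum_p (f p && ~~ g p : nat) + \sum_p (~~ f p && g p : nat).
  rewrite -big_split /=; apply: eq_bigr => i _; by case: (f i); case: (g i).
have h1 : \sum_p (f p && ~~ g p : nat) <= \sum_p (f p : nat).
  by apply: leq_sum => i _; case: (f i); case: (g i).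
have h2 : \sum_p (f p && ~~ g p : nat) <= \sum_p (~~ g p : nat).
  by apply: leq_sum => i _; case: (f i); case: (g i).
have h3 : \sum_p (~~ f p && g p : nat) <= \sum_p (g p : nat).
  by apply: leq_sum => i _; case: (f i); case: (g i).
have h4 : \sum_p (~~ f p && g p : nat) <= \sum_p (~~ f p : nat).
  by apply: leq_sum => i _; case: (f i); case: (g i).
rewrite E; lia.
Qed.

Definition join k l (f : {ffun 'I_k -> {ffun 'I_l -> bool}}) : {ffun 'I_(k * l) -> bool} :=
  [ffun j => f (unpair j).1 (unpair j).2].
Definition splitf k l (s : {ffun 'I_(k * l) -> bool}) : {ffun 'I_k -> {ffun 'I_l -> bool}} :=
  [ffun b => [ffun p => s (mxvec_index b p)]].

Lemma card_S2 k l v :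
  #|[set s : {ffun 'I_(k * l) -> bool} |
      [forall b : 'I_k, \sum_(p < l) (s (mxvec_index b p) : nat) == v]]| = 'C(l, v) ^ k.
Proof.
rewrite card_sum.
under eq_bigr => s _ do rewrite -prod_bool.
rewrite (reindex (@join k l)); last first.
  exists (@splitf k l) => [f _|s _].
    apply/ffunP => b; apply/ffunP => p; by rewrite !ffunE unpairK.
  apply/ffunP => j; by rewrite !ffunE pairK.
under eq_bigr => f _ do under eq_bigr => b _ do under eq_bigr => p _ do rewrite ffunE unpairK /=.
rewrite -(@bigA_distr_bigA _ _ _ _ _ _ _ (fun (b : 'I_k) (t : {ffun 'I_l -> bool}) => (\sum_p (t p : nat) == v : nat))).
rewrite prod_nat_const card_ord; congr (_ ^ _).
rewrite -[X in 'C(X, _)](card_ord l) -card_draws card_sum.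
rewrite (reindex (fun t : {ffun 'I_l -> bool} => [set p | t p])); last first.
  exists (fun B : {set 'I_l} => [ffun p => p \in B]) => [t _|B _].
    by apply/ffunP => p; rewrite ffunE inE.
  by apply/setP => p; rewrite inE ffunE.
by apply: eq_bigr => t _; rewrite card_sum.
Qed.

Local Open Scope ring_scope.

Lemma rat_step (a a' K Q : nat) (x : rat) :
  (0 < Q)%N -> (a * Q <= K * a')%N -> x = K%:R / Q%:R -> (a%:R : rat) <= x * a'%:R.
Proof.
move=> HQ H ->; rewrite mulrAC ler_pdivlMr ?ltr0n // -!natrM ler_nat.
by [].
Qed.

Theorem corollary1 (m n w d l v : nat) :
  (0 < m)%N -> (0 < n)%N -> (0 < d)%N ->
  (1 <= w)%N -> (w <= m - 1)%N ->
  (0 < l)%N -> (l %| n)%N -> (v <= l)%N ->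
  ((A m n w d%:Z)%:R : rat) <=
    (m%:R / w%:R) ^+ ((n %/ l) * v) *
    (m%:R / (m - w)%:R) ^+ (n - (n %/ l) * v) *
    (A ((m - 1) * l) (n %/ l) (l * w - v) d%:Z)%:R
  /\
  ((A m n w d%:Z)%:R : rat) <=
    ((m%:R ^+ l) / ('C(l, v)%:R * w%:R ^+ v * (m - w)%:R ^+ (l - v))) ^+ (n %/ l) *
    (A ((m - 1) * l) (n %/ l) (l * w - v)
       (d%:Z - (n %/ l)%:Z * (minn v (l - v))%:Z))%:R.
Proof.
move=> m0 n0 d0 w1 wm l0 ln vl.
case: m m0 wm => // m' _ wm.
case/dvdnP: ln => k nk; subst n.
rewrite mulnK // subn1 /=.
have Mw : (0 < m'.+1 - w)%N by rewrite subn_gt0; move: wm; rewrite subn1 /=; lia.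
have kvl : (k * v <= k * l)%N by rewrite leq_mul2l vl orbT.
split.
- set s0 : {ffun 'I_(k * l) -> bool} := [ffun j => ((unpair j).2 < v)%N].
  have key : forall C : {set 'M[bool]_(m'.+1, k * l)}, is_code w d%:Z C ->
      (#|C| * (#|[set s0]| * (w ^ (k * v) * (m'.+1 - w) ^ (k * l - k * v))) <=
       m'.+1 ^ (k * l) * A (m' * l) k (l * w - v) d%:Z)%N.
    move=> C HC.
    apply: (@avg m' k l w v d%:Z d%:Z 0 C [set s0] HC).
    + move=> s; rewrite inE => /eqP -> b.
      under eq_bigr => p _ do rewrite ffunE unpairK /=.
      exact: sum_lt.
    + move=> s1 s2; rewrite !inE => /eqP -> /eqP ->.
      by rewrite big1 // => j _; rewrite eqxx.
    + by rewrite addr0.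
  have := max_mul_le key; rewrite cards1 mul1n => H.
  apply: (rat_step _ H); first by rewrite muln_gt0 !expn_gt0 w1 Mw.
  rewrite !expr_div_n mulf_div -exprD subnKC // !natrX natrM.
  by rewrite !natrX.
- set S2 := [set s : {ffun 'I_(k * l) -> bool} |
      [forall b : 'I_k, \sum_(p < l) (s (mxvec_index b p) : nat) == v]].
  have key : forall C : {set 'M[bool]_(m'.+1, k * l)}, is_code w d%:Z C ->
      (#|C| * (#|S2| * (w ^ (k * v) * (m'.+1 - w) ^ (k * l - k * v))) <=
       m'.+1 ^ (k * l) * A (m' * l) k (l * w - v) (d%:Z - k%:Z * (minn v (l - v))%:Z))%N.
    move=> C HC.
    apply: (@avg m' k l w v d%:Z _ (k * (2 * minn v (l - v))) C S2 HC).
    + move=> s; rewrite inE => /forallP H b; exact/eqP/H.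
    + move=> s1 s2; rewrite !inE => /forallP H1 /forallP H2.
      rewrite big_pair; apply: (@leq_trans (\sum_(b < k) 2 * minn v (l - v))%N).
        apply: leq_sum => b _; apply: block_diff; exact/eqP.
      by rewrite sum_nat_const card_ord.
    + rewrite PoszM; lia.
  have := max_mul_le key; rewrite card_S2 => H.
  apply: (rat_step _ H); first by rewrite !muln_gt0 !expn_gt0 bin_gt0 vl w1 Mw.
  rewrite -!natrX -!natrM expr_div_n -!natrX.
  congr (_ / _); congr (_%:R).
    by rewrite -expnM mulnC.
  by rewrite !expnMn -!expnM -mulnBr mulnA [(v * k)%N]mulnC [((l - v) * k)%N]mulnC.
Qed.
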